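(* Let $H=\bigcup_{j=1}^n(c_j,d_j)\subset\mathbb R$ with the closed intervals $[c_j,d_j]$ pairwise disjoint, let $\mathcal B$ be a finite index set and $m\ge1$. Assume: for each $\beta\in\mathcal B$, $b_\beta,\theta_\beta\in C^m(\bar H)$, $b_\beta(x)>0$ for all $x\in\bar H$, $\theta_\beta(H)\subset H$; and there exist an integer $\mu\ge1$ and $\kappa<1$ with $|\theta_\omega(x)-\theta_\omega(y)|\le\kappa|x-y|$ for all $\omega\in\mathcal B_\mu$ and $x,y\in\bar H$. For $s>0$ let $L_s$ be $(L_sf)(x)=\sum_{\beta\in\mathcal B}[b_\beta(x)]^sf(\theta_\beta(x))$, and let $v_s$ be its strictly positive $C^m$ eigenvector with eigenvalue $r(L_s)$. Let $\epsilon_0=1$ and for $\nu\ge1$ $$\epsilon_\nu=\sup\Big\{\frac{|\theta_\omega(x)-\theta_\omega(y)|}{|x-y|}:\omega\in\mathcal B_\nu,\ x,y\in H,\ x\ne y\Big\},$$ and $C_1=\sup\{|Db_\beta(x)|/b_\beta(x):\beta\in\mathcal B,x\in H\}$. Then for $s>0$, $$\sup\Big\{\frac{|Dv_s(x)|}{v_s(x)}:x\in\bar H\Big\}\le C_1s\sum_{\nu=0}^\infty\epsilon_\nu.$$ Moreover, if $\delta\in\{0,1\}$ and $(-1)^\delta Db_\omega(x)/b_\omega(x)\le0$ for all $\omega\in\mathcal B_\nu$, all $\nu\ge1$ and all $x\in\bar H$, then $(-1)^\delta Dv_s(x)\le0$ for all $x\in\bar H$ and all $s>0$.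
   Context: $D=d/dx$. $C^m(\bar H)$ denotes real $C^m$ functions on $H$ whose derivatives of order $\le m$ extend continuously to $\bar H$. $\mathcal B_\nu=\{(j_1,\ldots,j_\nu):j_k\in\mathcal B\}$; for $\omega=(j_1,\ldots,j_\nu)$, $\theta_\omega=\theta_{j_\nu}\circ\cdots\circ\theta_{j_1}$ and $b_\omega(x)=b_{j_\nu}(\theta_{(j_1,\ldots,j_{\nu-1})}(x))\cdots b_{j_2}(\theta_{j_1}(x))\,b_{j_1}(x)$. Under these hypotheses, $L_s$ acting on $C^m(\bar H)$ has a strictly positive $C^m$ eigenvector $v_s$, unique up to positive multiples, with eigenvalue $r(L_s)>0$, and $\sum_\nu\epsilon_\nu<\infty$. *)

(* Defs.v *)
From Stdlib Require Import Reals Lra List.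
From Coquelicot Require Export Coquelicot.
Import ListNotations.
Open Scope R_scope.

Definition Hset (n : nat) (c d : nat -> R) (x : R) : Prop :=
  exists j, (j < n)%nat /\ c j < x /\ x < d j.
Definition barHset (n : nat) (c d : nat -> R) (x : R) : Prop :=
  exists j, (j < n)%nat /\ c j <= x /\ x <= d j.

Definition cont_on (S : R -> Prop) (g : R -> R) : Prop :=
  forall x, S x -> filterlim g (within S (locally x)) (locally (g x)).

(* f in C^m(bar H): the derivatives of order <= m on H exist and extend
   continuously to bar H (F k is the continuous extension of the k-th
   derivative; F 0 agrees with f on bar H). *)
Definition Cm_bar (n : nat) (c d : nat -> R) (m : nat) (f : R -> R) : Prop :=
  exists F : nat -> R -> R,
    (forall x, barHset n c d x -> F O x = f x) /\
    (forall k, (k <= m)%nat -> cont_on (barHset n c d) (F k)) /\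
    (forall k x, (k < m)%nat -> Hset n c d x -> is_derive (F k) x (F (Nat.succ k) x)).

Definition Dext (n : nat) (c d : nat -> R) (f g : R -> R) : Prop :=
  cont_on (barHset n c d) g /\ (forall x, Hset n c d x -> is_derive f x (g x)).

(* words omega = (j_1,...,j_nu) in B_nu, with B = {0,...,N-1} *)
Definition word (N nu : nat) (w : list nat) : Prop :=
  length w = nu /\ List.Forall (fun j => (j < N)%nat) w.

(* theta_omega = theta_{j_nu} o ... o theta_{j_1} *)
Definition theta_w (th : nat -> R -> R) (w : list nat) (x : R) : R :=
  fold_left (fun y j => th j y) w x.

(* b_omega(x) = b_{j_nu}(theta_{(j_1..j_{nu-1})} x) ... b_{j_2}(theta_{j_1} x) b_{j_1}(x) *)
Fixpoint b_w (b th : nat -> R -> R) (w : list nat) (x : R) : R :=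
  match w with
  | [] => 1
  | j :: w' => b j x * b_w b th w' (th j x)
  end.

Definition sumB (N : nat) (F : nat -> R) : R :=
  fold_right Rplus 0 (map F (seq 0 N)).

Definition Ls (N : nat) (b th : nat -> R -> R) (s : R) (f : R -> R) (x : R) : R :=
  sumB N (fun beta => Rpower (b beta x) s * f (th beta x)).

(* epsilon_0 = 1, epsilon_nu = sup of Lipschitz quotients of theta_omega on H
   (the sups are finite under the hypotheses; sup of an empty set read as 0) *)
Definition eps_nu (n : nat) (c d : nat -> R) (N : nat) (th : nat -> R -> R) (nu : nat) : R :=
  match nu with
  | O => 1
  | Datatypes.S _ => real (Lub_Rbar (fun r => exists w x y, word N nu w /\
             Hset n c d x /\ Hset n c d y /\ x <> y /\
             r = Rabs (theta_w th w x - theta_w th w y) / Rabs (x - y)))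
  end.

Definition C1const (n : nat) (c d : nat -> R) (N : nat) (b : nat -> R -> R) : R :=
  real (Lub_Rbar (fun r => exists beta x, (beta < N)%nat /\ Hset n c d x /\
           r = Rabs (Derive (b beta) x) / b beta x)).

(* sum_{nu=0}^infty epsilon_nu, as an extended real (limit of increasing partial sums) *)
Definition sum_eps (n : nat) (c d : nat -> R) (N : nat) (th : nat -> R -> R) : Rbar :=
  Lim_seq (sum_n (eps_nu n c d N th)).

(* Main.v *)
Require Import Defs.
From Stdlib Require Import Reals List.
From Coquelicot Require Import Coquelicot.
From Stdlib Require Import Lra Lia IndefiniteDescription.
Import ListNotations.
Open Scope R_scope.

Lemma ballR x e y : ball x e y <-> Rabs (y - x) < e.
Proof. reflexivity. Qed.

Lemma locR x (P : R -> Prop) : (exists e, 0 < e /\ forall y, Rabs (y - x) < e -> P y) -> locally x P.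
Proof. intros [e [He H]]. exists (mkposreal e He). intros y Hy. apply H. exact Hy. Qed.

Lemma fin_pos (n : nat) (P : nat -> R -> Prop) :
  (forall i g g', 0 < g' -> g' <= g -> P i g -> P i g') ->
  (forall i, (i < n)%nat -> exists g, 0 < g /\ P i g) ->
  exists g, 0 < g /\ forall i, (i < n)%nat -> P i g.
Proof.
  intros Hm. induction n as [|n IH]; intros H.
  - exists 1; split; [lra|]; intros; lia.
  - destruct IH as [g1 [Hg1 H1]]. { intros i Hi; apply H; lia. }
    destruct (H n) as [g2 [Hg2 H2]]; [lia|].
    exists (Rmin g1 g2); split; [apply Rmin_pos; auto|].
    intros i Hi. destruct (Nat.eq_dec i n) as [->|Hne].
    + eapply Hm; [apply Rmin_pos; auto| apply Rmin_r| exact H2].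
    + eapply Hm; [apply Rmin_pos; auto| apply Rmin_l| apply H1; lia].
Qed.

Lemma fin_ub (n : nat) (P : nat -> R -> Prop) :
  (forall i g g', g <= g' -> P i g -> P i g') ->
  (forall i, (i < n)%nat -> exists g, P i g) ->
  exists g, forall i, (i < n)%nat -> P i g.
Proof.
  intros Hm. induction n as [|n IH]; intros H.
  - exists 0; intros; lia.
  - destruct IH as [g1 H1]. { intros i Hi; apply H; lia. }
    destruct (H n) as [g2 H2]; [lia|].
    exists (Rmax g1 g2).
    intros i Hi. destruct (Nat.eq_dec i n) as [->|Hne].
    + eapply Hm; [apply Rmax_r| exact H2].
    + eapply Hm; [apply Rmax_l| apply H1; lia].
Qed.

Section Sets.
Variables (n : nat) (c d : nat -> R).
Hypothesis Hcd : forall j, (j < n)%nat -> c j < d j.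
Hypothesis Hdisj : forall i j, (i < n)%nat -> (j < n)%nat -> i <> j -> d i < c j \/ d j < c i.

Lemma H_sub x : Hset n c d x -> barHset n c d x.
Proof. intros [j [Hj [H1 H2]]]. exists j; repeat split; auto; lra. Qed.

Lemma H_open x : Hset n c d x -> exists j, (j < n)%nat /\ c j < x < d j /\
   exists e, 0 < e /\ forall y, Rabs (y - x) < e -> c j < y < d j.
Proof.
  intros [j [Hj [H1 H2]]]. exists j; split; auto; split; [lra|].
  exists (Rmin (x - c j) (d j - x)); split; [apply Rmin_pos; lra|].
  intros y Hy. pose proof (Rmin_l (x - c j) (d j - x)). pose proof (Rmin_r (x - c j) (d j - x)).
  apply Rabs_def2 in Hy. lra.
Qed.

Lemma H_loc x : Hset n c d x -> locally x (Hset n c d).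
Proof.
  intros Hx. destruct (H_open x Hx) as [j [Hj [_ [e [He H]]]]].
  apply locR. exists e; split; auto. intros y Hy. exists j; split; auto.
Qed.

Lemma approx x : barHset n c d x -> forall e, 0 < e -> exists y, Hset n c d y /\ Rabs (y - x) < e.
Proof.
  intros [j [Hj [H1 H2]]] e He. pose proof (Hcd j Hj).
  destruct (Rlt_dec x (d j)) as [Hl|Hl].
  - exists (x + Rmin e (d j - x) / 2). pose proof (Rmin_l e (d j - x)). pose proof (Rmin_r e (d j - x)).
    assert (0 < Rmin e (d j - x)) by (apply Rmin_pos; lra).
    split. exists j; split; auto; lra.
    rewrite Rabs_right; lra.
  - exists (x - Rmin e (d j - c j) / 2). pose proof (Rmin_l e (d j - c j)). pose proof (Rmin_r e (d j - c j)).
    assert (0 < Rmin e (d j - c j)) by (apply Rmin_pos; lra).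
    split. exists j; split; auto; lra.
    rewrite Rabs_left; lra.
Qed.

Lemma barH_bnd : exists B, forall x, barHset n c d x -> Rabs x <= B.
Proof.
  destruct (fin_ub n (fun j B => forall x, c j <= x <= d j -> Rabs x <= B)) as [B HB].
  - intros i g g' Hg H x Hx. specialize (H x Hx). lra.
  - intros i Hi. exists (Rabs (c i) + Rabs (d i)). intros x Hx.
    unfold Rabs; repeat destruct Rcase_abs; lra.
  - exists B. intros x [j [Hj Hx]]. apply (HB j Hj x Hx).
Qed.

Lemma gap : exists g, 0 < g /\ forall i l, (i < n)%nat -> (l < n)%nat -> i <> l ->
   forall x y, c i < x < d i -> c l < y < d l -> g <= Rabs (x - y).
Proof.
  destruct (fin_pos n (fun i g => forall l, (l < n)%nat -> i <> l ->
   forall x y, c i < x < d i -> c l < y < d l -> g <= Rabs (x - y))) as [g [Hg H]].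
  - intros i g g' H1 H2 H3 l Hl Hne x y Hx Hy. specialize (H3 l Hl Hne x y Hx Hy). lra.
  - intros i Hi.
    destruct (fin_pos n (fun l g => i <> l ->
       forall x y, c i < x < d i -> c l < y < d l -> g <= Rabs (x - y))) as [g [Hg H]].
    + intros l g g' H1 H2 H3 Hne x y Hx Hy. specialize (H3 Hne x y Hx Hy). lra.
    + intros l Hl. destruct (Nat.eq_dec i l) as [->|Hne].
      * exists 1; split; [lra|]; intros; congruence.
      * destruct (Hdisj i l Hi Hl Hne) as [Ho|Ho].
        -- exists (c l - d i); split; [lra|]. intros _ x y Hx Hy. rewrite Rabs_left; lra.
        -- exists (c i - d l); split; [lra|]. intros _ x y Hx Hy. rewrite Rabs_right; lra.
    + exists g; split; auto.
  - exists g; split; auto. intros i l Hi Hl; apply H; auto.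
Qed.

Lemma compl_open x : ~ barHset n c d x -> exists r, 0 < r /\ forall y, Rabs (y - x) < r -> ~ barHset n c d y.
Proof.
  intros Hx.
  destruct (fin_pos n (fun j r => forall y, Rabs (y - x) < r -> ~ (c j <= y <= d j))) as [r [Hr H]].
  - intros i g g' H1 H2 H3 y Hy. apply H3; lra.
  - intros j Hj. destruct (Rlt_dec x (c j)) as [Hl|Hl].
    + exists (c j - x); split; [lra|]. intros y Hy. apply Rabs_def2 in Hy. lra.
    + destruct (Rlt_dec (d j) x) as [Hl2|Hl2].
      * exists (x - d j); split; [lra|]. intros y Hy. apply Rabs_def2 in Hy. lra.
      * exfalso. apply Hx. exists j; split; auto; lra.
  - exists r; split; auto. intros y Hy [j [Hj Hy2]]. apply (H j Hj y Hy Hy2).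
Qed.

End Sets.

Lemma cont_on_mult S f g : cont_on S f -> cont_on S g -> cont_on S (fun x => f x * g x).
Proof. intros Hf Hg x Sx.
 eapply filterlim_comp_2; [apply Hf, Sx | apply Hg, Sx | ].
 apply (filterlim_mult (K:=R_AbsRing)). Qed.
Lemma cont_on_plus S f g : cont_on S f -> cont_on S g -> cont_on S (fun x => f x + g x).
Proof. intros Hf Hg x Sx.
 eapply filterlim_comp_2; [apply Hf, Sx | apply Hg, Sx | ].
 apply (filterlim_plus (V:=R_NormedModule)). Qed.
Lemma cont_on_inv S f : cont_on S f -> (forall x, S x -> f x <> 0) -> cont_on S (fun x => / f x).
Proof. intros Hf Hn x Sx.
 eapply filterlim_comp; [apply Hf, Sx | ].
 apply (filterlim_Rbar_inv (Finite (f x))). intro h; injection h; apply Hn; auto. Qed.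
Lemma cont_on_const S a : cont_on S (fun _ => a).
Proof. intros x Sx. apply filterlim_const. Qed.

Lemma cont_on_ext S f g : cont_on S f -> (forall x, S x -> f x = g x) -> cont_on S g.
Proof.
  intros Hf He x Sx. rewrite <- (He x Sx).
  apply filterlim_ext_loc with f; [|apply Hf, Sx].
  exists (mkposreal 1 Rlt_0_1). intros y _ Sy. apply He; auto.
Qed.

Lemma cont_on_comp S f g : cont_on S f -> cont_on S g -> (forall x, S x -> S (g x)) ->
  cont_on S (fun x => f (g x)).
Proof.
  intros Hf Hg HS x Sx. eapply filterlim_comp; [|apply Hf, HS, Sx].
  intros P HP. destruct HP as [eps Heps].
  assert (H := Hg x Sx). apply filterlim_locally with (eps := eps) in H.
  destruct H as [e He]. exists e. intros y Hy Sy. apply Heps; [|apply HS; auto].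
  apply He; auto.
Qed.

Lemma cont_eps S f x : cont_on S f -> S x -> forall e, 0 < e ->
  exists dl, 0 < dl /\ forall y, S y -> Rabs (y - x) < dl -> Rabs (f y - f x) < e.
Proof.
  intros Hf Sx e He. assert (H := Hf x Sx). apply filterlim_locally with (eps := mkposreal e He) in H.
  destruct H as [dl Hdl]. exists dl; split; [apply cond_pos|]. intros y Sy Hy. apply (Hdl y Hy Sy).
Qed.

Section Cont.
Variables (n : nat) (c d : nat -> R).
Hypothesis Hcd : forall j, (j < n)%nat -> c j < d j.

Lemma lim_le0 f : cont_on (barHset n c d) f -> (forall y, Hset n c d y -> f y <= 0) ->
  forall x, barHset n c d x -> f x <= 0.
Proof.
  intros Hf Hy x Hx. destruct (Rle_dec (f x) 0) as [?|Hn]; auto. exfalso.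
  destruct (cont_eps _ _ _ Hf Hx (f x)) as [dl [Hdl H]]; [lra|].
  destruct (approx n c d Hcd x Hx dl Hdl) as [y [Hy1 Hy2]].
  specialize (H y (H_sub n c d y Hy1) Hy2). specialize (Hy y Hy1).
  apply Rabs_def2 in H. lra.
Qed.

Lemma maps_bar f : cont_on (barHset n c d) f -> (forall y, Hset n c d y -> Hset n c d (f y)) ->
  forall x, barHset n c d x -> barHset n c d (f x).
Proof.
  intros Hf Hy x Hx. destruct (Classical_Prop.classic (barHset n c d (f x))) as [?|Hn]; auto. exfalso.
  destruct (compl_open n c d (f x) Hn) as [r [Hr Hr2]].
  destruct (cont_eps _ _ _ Hf Hx r Hr) as [dl [Hdl H]].
  destruct (approx n c d Hcd x Hx dl Hdl) as [y [Hy1 Hy2]].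
  specialize (H y (H_sub n c d y Hy1) Hy2).
  apply (Hr2 (f y) H). apply H_sub. auto.
Qed.

Definition clamp (a b x : R) := Rmax a (Rmin b x).

Lemma clamp_lip a b x y : a <= b -> Rabs (clamp a b y - clamp a b x) <= Rabs (y - x).
Proof.
  intros Hab. unfold clamp, Rmax, Rmin.
  repeat destruct Rle_dec; unfold Rabs; repeat destruct Rcase_abs; lra.
Qed.

Lemma clamp_in a b x : a <= b -> a <= clamp a b x <= b.
Proof. intros Hab. unfold clamp, Rmax, Rmin. repeat destruct Rle_dec; lra. Qed.

Lemma clamp_id a b x : a <= x <= b -> clamp a b x = x.
Proof. intros Hab. unfold clamp, Rmax, Rmin. repeat destruct Rle_dec; lra. Qed.

Lemma cont_bounded f : cont_on (barHset n c d) f ->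
  exists K, forall x, barHset n c d x -> Rabs (f x) <= K.
Proof.
  intros Hf.
  destruct (fin_ub n (fun j K => forall x, c j <= x <= d j -> Rabs (f x) <= K)) as [K HK].
  - intros i g g' H1 H2 x Hx. specialize (H2 x Hx). lra.
  - intros j Hj. pose proof (Hcd j Hj).
    assert (Hbar : forall z, barHset n c d (clamp (c j) (d j) z)).
    { intros z. exists j; split; auto. apply clamp_in; lra. }
    destruct (bounded_continuity (fun z => f (clamp (c j) (d j) z)) (c j) (d j)) as [M HM].
    + intros x Hx. eapply filterlim_comp; [|apply Hf, Hbar].
      intros P HP. destruct HP as [eps Heps]. exists eps. intros y Hy.
      apply Heps; [|apply Hbar]. apply ballR. apply ballR in Hy.
      eapply Rle_lt_trans; [apply clamp_lip; lra| exact Hy].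
    + exists M. intros x Hx. specialize (HM x Hx). rewrite clamp_id in HM; auto.
      apply Rlt_le. exact HM.
  - exists K. intros x [j [Hj Hx]]. apply (HK j Hj x Hx).
Qed.

End Cont.

Lemma lub_le (E : R -> Prop) B : (forall r, E r -> r <= B) -> 0 <= B -> real (Lub_Rbar E) <= B.
Proof.
  intros HE HB. destruct (Lub_Rbar_correct E) as [Hub Hl].
  assert (H := Hl (Finite B) HE). destruct (Lub_Rbar E); simpl in *; auto; contradiction.
Qed.

Lemma lub_ge (E : R -> Prop) B r : (forall r, E r -> r <= B) -> E r -> r <= real (Lub_Rbar E).
Proof.
  intros HE Hr. destruct (Lub_Rbar_correct E) as [Hub Hl].
  assert (H := Hl (Finite B) HE). assert (H2 := Hub r Hr).
  destruct (Lub_Rbar E); simpl in *; auto; contradiction.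
Qed.

Lemma lub_nonneg (E : R -> Prop) : (forall r, E r -> 0 <= r) -> 0 <= real (Lub_Rbar E).
Proof.
  intros HE. destruct (Lub_Rbar_correct E) as [Hub Hl].
  destruct (Lub_Rbar E) eqn:Hq; simpl; try lra.
  destruct (Classical_Prop.classic (exists r, E r)) as [[x Hx]|Hn].
  - specialize (Hub x Hx). simpl in Hub. specialize (HE x Hx). lra.
  - assert (H : is_ub_Rbar E m_infty). { intros x Hx. exfalso. apply Hn. eauto. }
    specialize (Hl _ H). simpl in Hl. contradiction.
Qed.

Lemma word_cons N k j w : (j < N)%nat -> word N k w -> word N (S k) (j :: w).
Proof. intros Hj [Hl Hf]. split; simpl; auto. Qed.

Lemma word_inv N k j w : word N k (j :: w) -> (j < N)%nat /\ word N (pred k) w.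
Proof. intros [Hl Hf]. inversion Hf; subst. split; auto. split; auto. Qed.

Lemma word_app_inv N w j : word N (length (w ++ [j])) (w ++ [j]) -> (j < N)%nat /\ word N (length w) w.
Proof. intros [Hl Hf]. apply Forall_app in Hf as [H1 H2]. inversion H2; subst. split; auto. split; auto. Qed.

Lemma word_split N a b w : word N (a + b) w -> exists w1 w2, w = w1 ++ w2 /\ word N a w1 /\ word N b w2.
Proof.
  intros [Hl Hf]. exists (firstn a w), (skipn a w). split; [symmetry; apply firstn_skipn|].
  rewrite <- (firstn_skipn a w) in Hf. apply Forall_app in Hf as [H1 H2].
  split; split; auto.
  - rewrite firstn_length. lia.
  - rewrite skipn_length. lia.
Qed.

Lemma theta_app th w1 w2 x : theta_w th (w1 ++ w2) x = theta_w th w2 (theta_w th w1 x).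
Proof. unfold theta_w. apply fold_left_app. Qed.

Definition Eset n c d N th nu := fun r => exists w x y, word N nu w /\
             Hset n c d x /\ Hset n c d y /\ x <> y /\
             r = Rabs (theta_w th w x - theta_w th w y) / Rabs (x - y).

Lemma eps_S n c d N th k : eps_nu n c d N th (S k) = real (Lub_Rbar (Eset n c d N th (S k))).
Proof. reflexivity. Qed.

Section Eps.
Variables (n : nat) (c d : nat -> R) (N : nat) (th : nat -> R -> R).
Hypothesis Hth_H : forall beta x, (beta < N)%nat -> Hset n c d x -> Hset n c d (th beta x).
Variable L : R.
Hypothesis HL0 : 0 <= L.
Hypothesis HL : forall j x y, (j < N)%nat -> Hset n c d x -> Hset n c d y ->
  Rabs (th j x - th j y) <= L * Rabs (x - y).
Variables (mu : nat) (kappa : R).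
Hypothesis Hmu : (1 <= mu)%nat.
Hypothesis Hkappa : kappa < 1.
Hypothesis Hcontr : forall w x y, word N mu w -> barHset n c d x -> barHset n c d y ->
      Rabs (theta_w th w x - theta_w th w y) <= kappa * Rabs (x - y).

Notation eps := (eps_nu n c d N th).
Notation E := (Eset n c d N th).

Lemma Tw_H w : forall k x, word N k w -> Hset n c d x -> Hset n c d (theta_w th w x).
Proof.
  induction w as [|j w IH]; intros k x Hw Hx; simpl; auto.
  apply word_inv in Hw as [Hj Hw]. change (Hset n c d (theta_w th w (th j x))).
  eapply IH; eauto.
Qed.

Lemma Tw_lip w : forall k x y, word N k w -> Hset n c d x -> Hset n c d y ->
  Rabs (theta_w th w x - theta_w th w y) <= L ^ k * Rabs (x - y).
Proof.
  induction w as [|j w IH]; intros k x y Hw Hx Hy.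
  - destruct Hw as [Hl _]. simpl in Hl. subst. simpl. lra.
  - pose proof Hw as [Hl _]. simpl in Hl. subst k.
    apply word_inv in Hw as [Hj Hw]. simpl in Hw.
    change (Rabs (theta_w th w (th j x) - theta_w th w (th j y)) <= L ^ S (length w) * Rabs (x - y)).
    eapply Rle_trans; [apply (IH _ _ _ Hw); auto|].
    simpl. rewrite (Rmult_comm L), Rmult_assoc. apply Rmult_le_compat_l; [apply pow_le; auto|].
    apply HL; auto.
Qed.

Lemma Eset_bnd k r : E k r -> 0 <= r <= L ^ k.
Proof.
  intros [w [x [y [Hw [Hx [Hy [Hne ->]]]]]]].
  assert (0 < Rabs (x - y)) by (apply Rabs_pos_lt; lra).
  split. { apply Rle_mult_inv_pos; auto; apply Rabs_pos. }
  apply Rmult_le_reg_r with (Rabs (x - y)); auto. unfold Rdiv. rewrite Rmult_assoc, Rinv_l; [|lra].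
  rewrite Rmult_1_r. eapply Tw_lip; eauto.
Qed.

Lemma eps_ge k r : E (S k) r -> r <= eps (S k).
Proof. intros Hr. rewrite eps_S. apply lub_ge with (L ^ S k); auto. intros; apply Eset_bnd; auto. Qed.

Lemma eps_nonneg k : 0 <= eps k.
Proof. destruct k; [simpl; lra|]. rewrite eps_S. apply lub_nonneg. intros r Hr; apply (Eset_bnd _ _ Hr). Qed.

Lemma eps_le k B : (forall r, E (S k) r -> r <= B) -> 0 <= B -> eps (S k) <= B.
Proof. intros. rewrite eps_S. apply lub_le; auto. Qed.

Lemma eps_sub a b : eps (a + b) <= eps a * eps b.
Proof.
  destruct a as [|a]. { simpl. lra. }
  destruct b as [|b]. { rewrite Nat.add_0_r. simpl. lra. }
  replace (S a + S b)%nat with (S (a + S b)) by lia.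
  apply eps_le; [|apply Rmult_le_pos; apply eps_nonneg].
  intros r [w [x [y [Hw [Hx [Hy [Hne ->]]]]]]].
  replace (S (a + S b)) with (S a + S b)%nat in Hw by lia.
  destruct (word_split _ _ _ _ Hw) as [w1 [w2 [-> [Hw1 Hw2]]]].
  rewrite !theta_app.
  set (u := theta_w th w1 x). set (u' := theta_w th w1 y).
  assert (Hu : Hset n c d u) by (eapply Tw_H; eauto).
  assert (Hu' : Hset n c d u') by (eapply Tw_H; eauto).
  assert (0 < Rabs (x - y)) by (apply Rabs_pos_lt; lra).
  destruct (Req_dec u u') as [Heq|Hne2].
  - rewrite Heq, Rminus_diag, Rabs_R0. unfold Rdiv; rewrite Rmult_0_l.
    apply Rmult_le_pos; apply eps_nonneg.
  - assert (0 < Rabs (u - u')) by (apply Rabs_pos_lt; lra).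
    assert (H1 : Rabs (u - u') / Rabs (x - y) <= eps (S a)).
    { apply eps_ge. exists w1, x, y; auto 10. }
    assert (H2 : Rabs (theta_w th w2 u - theta_w th w2 u') / Rabs (u - u') <= eps (S b)).
    { apply eps_ge. exists w2, u, u'; auto 10. }
    replace (Rabs (theta_w th w2 u - theta_w th w2 u') / Rabs (x - y)) with
      ((Rabs (u - u') / Rabs (x - y)) * (Rabs (theta_w th w2 u - theta_w th w2 u') / Rabs (u - u')))
      by (field; lra).
    apply Rmult_le_compat; auto.
    + apply Rle_mult_inv_pos; auto; apply Rabs_pos.
    + apply Rle_mult_inv_pos; auto; apply Rabs_pos.
Qed.

Definition kap' := (1 + Rmax kappa 0) / 2.

Lemma kap'_pos : 0 < kap' /\ kap' < 1.
Proof. unfold kap'. pose proof (Rmax_r kappa 0). destruct (Rmax_Rle kappa 0 (Rmax kappa 0)) as [_ _].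
  unfold Rmax; destruct Rle_dec; lra. Qed.

Lemma eps_mu : eps mu <= kap'.
Proof.
  destruct mu as [|k] eqn:Hm; [lia|]. apply eps_le; [|pose proof kap'_pos; lra].
  intros r [w [x [y [Hw [Hx [Hy [Hne ->]]]]]]].
  assert (0 < Rabs (x - y)) by (apply Rabs_pos_lt; lra).
  apply Rle_trans with kappa.
  - apply Rmult_le_reg_r with (Rabs (x - y)); auto. unfold Rdiv. rewrite Rmult_assoc, Rinv_l; [|lra].
    rewrite Rmult_1_r. apply Hcontr; auto; apply H_sub; auto.
  - unfold kap', Rmax; destruct Rle_dec; lra.
Qed.

Lemma eps_geom q r : eps (mu * q + r) <= kap' ^ q * eps r.
Proof.
  induction q.
  - rewrite Nat.mul_0_r. simpl. lra.
  - replace (mu * S q + r)%nat with (mu + (mu * q + r))%nat by lia.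
    eapply Rle_trans; [apply eps_sub|]. simpl. rewrite Rmult_assoc.
    apply Rmult_le_compat; auto; try apply eps_nonneg; try apply eps_mu.
Qed.

Lemma pow_dec (rho : R) a b : 0 <= rho <= 1 -> rho ^ (a + b) <= rho ^ a.
Proof.
  intros Hr. rewrite pow_add. rewrite <- (Rmult_1_r (rho ^ a)) at 2.
  apply Rmult_le_compat_l; [apply pow_le; lra|].
  induction b; simpl; [lra|]. rewrite <- (Rmult_1_r 1). apply Rmult_le_compat; try lra; apply pow_le; lra.
Qed.

Lemma eps_bound : exists C rho, 0 < rho < 1 /\ forall k, eps k <= C * rho ^ k.
Proof.
  pose proof kap'_pos as [Hk0 Hk1].
  set (rho := Rpower kap' (/ INR mu)).
  assert (Hmu0 : 0 < INR mu) by (apply lt_0_INR; lia).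
  assert (Hrho : rho ^ mu = kap').
  { unfold rho. rewrite <- Rpower_pow; [|apply exp_pos]. rewrite Rpower_mult, Rinv_l; [|lra].
    apply Rpower_1; auto. }
  assert (Hr0 : 0 < rho) by apply exp_pos.
  assert (Hr1 : rho < 1).
  { unfold rho, Rpower. rewrite <- exp_0. apply exp_increasing.
    assert (ln kap' < 0) by (rewrite <- ln_1; apply ln_increasing; lra).
    assert (0 < / INR mu) by (apply Rinv_0_lt_compat; lra). nra. }
  destruct (fin_ub mu (fun r B => eps r <= B)) as [E0 HE0].
  { intros; lra. } { intros i _. exists (eps i); lra. }
  exists (E0 / kap'), rho. split; [lra|]. intros k.
  assert (Hm : mu <> 0%nat) by lia.
  rewrite (Nat.div_mod k mu Hm). set (q := (k / mu)%nat). set (r := (k mod mu)%nat).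
  assert (Hr : (r < mu)%nat) by (apply Nat.mod_upper_bound; auto).
  eapply Rle_trans; [apply eps_geom|].
  assert (H1 : eps r <= E0) by auto.
  assert (H2 : rho ^ mu <= rho ^ r).
  { replace mu with (r + (mu - r))%nat at 1 by lia. apply pow_dec; lra. }
  rewrite pow_add, pow_mult, Hrho. rewrite Hrho in H2.
  assert (0 <= E0) by (eapply Rle_trans; [apply eps_nonneg| exact H1]).
  assert (0 <= kap' ^ q) by (apply pow_le; lra).
  apply Rle_trans with (kap' ^ q * E0); [apply Rmult_le_compat_l; auto|].
  apply Rle_trans with (kap' ^ q * E0 * (rho ^ r / kap')).
  - rewrite <- (Rmult_1_r (kap' ^ q * E0)) at 1. apply Rmult_le_compat_l; [nra|].
    apply Rmult_le_reg_r with kap'; auto. unfold Rdiv; rewrite Rmult_assoc, Rinv_l; lra.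
  - right. field. lra.
Qed.

Lemma eps_series : ex_series eps.
Proof.
  destruct eps_bound as [C [rho [Hr Hb]]].
  apply (ex_series_le (K:=R_AbsRing) (V:=R_CompleteNormedModule)) with (fun k => C * rho ^ k).
  - intros k. change (Rabs (eps k) <= C * rho ^ k). rewrite Rabs_pos_eq; [apply Hb|apply eps_nonneg].
  - apply (ex_series_scal_l (K:=R_AbsRing) (V:=R_NormedModule) C). apply ex_series_geom.
    rewrite Rabs_pos_eq; lra.
Qed.
End Eps.

Lemma der_mult (f g : R -> R) x df dg : is_derive f x df -> is_derive g x dg ->
  is_derive (fun y => f y * g y) x (df * g x + f x * dg).
Proof. intros H1 H2. apply (is_derive_mult (K:=R_AbsRing) f g x df dg H1 H2). intros; apply Rmult_comm. Qed.
Lemma der_plus (f g : R -> R) x df dg : is_derive f x df -> is_derive g x dg ->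
  is_derive (fun y => f y + g y) x (df + dg).
Proof. intros H1 H2. apply (is_derive_plus (K:=R_AbsRing) (V:=R_NormedModule) f g x df dg H1 H2). Qed.
Lemma der_comp (f g : R -> R) x df dg : is_derive f (g x) df -> is_derive g x dg ->
  is_derive (fun y => f (g y)) x (dg * df).
Proof. intros H1 H2. apply (is_derive_comp (K:=R_AbsRing) (V:=R_NormedModule) f g x df dg H1 H2). Qed.
Lemma der_unique (f : R -> R) x a b' : is_derive f x a -> is_derive f x b' -> a = b'.
Proof. intros H1 H2. apply is_derive_unique in H1. apply is_derive_unique in H2. congruence. Qed.
Lemma der_const (a x : R) : is_derive (fun _ => a) x 0.
Proof. apply (is_derive_const (K:=R_AbsRing) (V:=R_NormedModule)). Qed.

Lemma der_bound (f : R -> R) x l (S : R -> Prop) K : is_derive f x l ->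
  locally x S ->
  (forall y, S y -> y <> x -> Rabs (f y - f x) / Rabs (y - x) <= K) -> Rabs l <= K.
Proof.
  intros Hd [e He] HK. apply is_derive_Reals in Hd.
  apply Rnot_lt_le. intros Hlt.
  destruct (Hd (Rabs l - K)) as [dl Hdl]; [lra|].
  set (h := Rmin (dl/2) (e/2)).
  assert (Hh : 0 < h) by (apply Rmin_pos; [apply Rlt_mult_inv_pos; [apply cond_pos|lra]|apply Rlt_mult_inv_pos; [apply cond_pos|lra]]).
  assert (Hh1 : h < dl) by (unfold h; pose proof (Rmin_l (dl/2) (e/2)); pose proof (cond_pos dl); lra).
  assert (Hh2 : h < e) by (unfold h; pose proof (Rmin_r (dl/2) (e/2)); pose proof (cond_pos e); lra).
  specialize (Hdl h (Rgt_not_eq _ _ Hh)). rewrite Rabs_pos_eq in Hdl by lra. specialize (Hdl Hh1).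
  assert (HS : S (x + h)). { apply He. apply ballR. replace (x + h - x) with h by ring. rewrite Rabs_pos_eq; lra. }
  specialize (HK (x + h) HS). replace (x + h - x) with h in HK by ring.
  rewrite (Rabs_pos_eq h) in HK by lra. assert (x + h <> x) by lra. specialize (HK H).
  assert (Habs : Rabs ((f (x + h) - f x) / h) <= K). { unfold Rdiv. rewrite Rabs_mult, Rabs_inv, (Rabs_pos_eq h); lra. }
  pose proof (Rabs_triang_inv l ((f (x + h) - f x) / h)).
  rewrite <- Rabs_Ropp in Hdl. replace (- ((f (x + h) - f x) / h - l)) with (l - (f (x + h) - f x) / h) in Hdl by ring.
  lra.
Qed.

Definition lsum (l : list nat) (F : nat -> R) := fold_right Rplus 0 (map F l).

Lemma lsum_ext l F G : (forall j, In j l -> F j = G j) -> lsum l F = lsum l G.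
Proof. induction l; intros H; [reflexivity|]. unfold lsum in *; simpl. rewrite (H a (or_introl eq_refl)), IHl; [reflexivity|]. intros; apply H; simpl; auto. Qed.

Lemma lsum_lin l F G a b' : lsum l (fun j => a * F j + b' * G j) = a * lsum l F + b' * lsum l G.
Proof. induction l; unfold lsum in *; simpl; [ring|]. rewrite IHl. ring. Qed.

Lemma lsum_scal l F a : lsum l (fun j => a * F j) = a * lsum l F.
Proof. induction l; unfold lsum in *; simpl; [ring|]. rewrite IHl. ring. Qed.

Lemma lsum_le l F G : (forall j, In j l -> F j <= G j) -> lsum l F <= lsum l G.
Proof. induction l; intros H; unfold lsum in *; simpl; [lra|]. apply Rplus_le_compat; [apply H; simpl; auto| apply IHl; intros; apply H; simpl; auto]. Qed.

Lemma lsum_abs l F : Rabs (lsum l F) <= lsum l (fun j => Rabs (F j)).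
Proof. induction l; unfold lsum in *; simpl; [rewrite Rabs_R0; lra|]. eapply Rle_trans; [apply Rabs_triang|]. lra. Qed.

Lemma lsum_der l (F : nat -> R -> R) dF x : (forall j, In j l -> is_derive (F j) x (dF j)) ->
  is_derive (fun y => lsum l (fun j => F j y)) x (lsum l dF).
Proof.
  induction l; intros H; unfold lsum in *; simpl.
  - apply der_const.
  - apply (der_plus (F a) (fun y => fold_right Rplus 0 (map (fun j => F j y) l))).
    + apply H; simpl; auto.
    + apply IHl. intros; apply H; simpl; auto.
Qed.

Lemma term_bnd s p g V t D G T K : 0 < s -> 0 < p -> 0 < V -> Rabs g <= G -> Rabs t <= T ->
  Rabs D <= K * V -> Rabs (s * p * g * V + p * t * D) <= (s * G + T * K) * (p * V).
Proof.
  intros Hs Hp HV Hg Ht HD.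
  eapply Rle_trans; [apply Rabs_triang|]. rewrite !Rabs_mult.
  rewrite (Rabs_pos_eq s), (Rabs_pos_eq p), (Rabs_pos_eq V) by lra.
  assert (Rabs t * Rabs D <= T * (K * V)) by (apply Rmult_le_compat; auto; apply Rabs_pos).
  assert (s * p * V * Rabs g <= s * p * V * G) by (apply Rmult_le_compat_l; [|auto]; apply Rmult_le_pos; [|lra]; apply Rmult_le_pos; lra).
  assert (p * (Rabs t * Rabs D) <= p * (T * (K * V))) by (apply Rmult_le_compat_l; lra).
  nra.
Qed.

Lemma term_bnd2 sg s p g V t D T K : Rabs sg = 1 -> sg * g <= 0 -> 0 < s -> 0 < p -> 0 < V -> Rabs t <= T ->
  Rabs D <= K * V -> sg * (s * p * g * V + p * t * D) <= (T * K) * (p * V).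
Proof.
  intros Hsg Hg Hs Hp HV Ht HD.
  assert (H1 : s * p * V * (sg * g) <= 0).
  { assert (0 <= s * p * V) by (apply Rmult_le_pos; [|lra]; apply Rmult_le_pos; lra). nra. }
  assert (H2 : sg * t * D <= Rabs t * Rabs D).
  { eapply Rle_trans; [apply Rle_abs|]. rewrite !Rabs_mult, Hsg. lra. }
  assert (Rabs t * Rabs D <= T * (K * V)) by (apply Rmult_le_compat; auto; apply Rabs_pos).
  assert (p * (sg * t * D) <= p * (T * (K * V))) by (apply Rmult_le_compat_l; lra).
  nra.
Qed.

Section Main.
Variables (n : nat) (c d : nat -> R).
Hypothesis Hcd : forall j, (j < n)%nat -> c j < d j.
Hypothesis Hdisj : forall i j, (i < n)%nat -> (j < n)%nat -> i <> j -> d i < c j \/ d j < c i.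
Variables (N : nat) (b th Fb1 Fth1 : nat -> R -> R).
Notation HH := (Hset n c d).
Notation BH := (barHset n c d).
Hypothesis Hb_cont : forall j, (j < N)%nat -> cont_on BH (b j).
Hypothesis Hb1_cont : forall j, (j < N)%nat -> cont_on BH (Fb1 j).
Hypothesis Hb_der : forall j x, (j < N)%nat -> HH x -> is_derive (b j) x (Fb1 j x).
Hypothesis Hth_cont : forall j, (j < N)%nat -> cont_on BH (th j).
Hypothesis Hth1_cont : forall j, (j < N)%nat -> cont_on BH (Fth1 j).
Hypothesis Hth_der : forall j x, (j < N)%nat -> HH x -> is_derive (th j) x (Fth1 j x).
Hypothesis Hb_pos : forall beta x, (beta < N)%nat -> BH x -> 0 < b beta x.
Hypothesis Hth_H : forall beta x, (beta < N)%nat -> HH x -> HH (th beta x).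

Lemma th_bar j x : (j < N)%nat -> BH x -> BH (th j x).
Proof. intros Hj Hx. apply (maps_bar n c d Hcd); auto. Qed.

Lemma lip1 : exists L, 0 <= L /\ forall j x y, (j < N)%nat -> HH x -> HH y ->
  Rabs (th j x - th j y) <= L * Rabs (x - y).
Proof.
  destruct (barH_bnd n c d) as [B HB].
  destruct (gap n c d Hdisj) as [g [Hg Hgap]].
  destruct (fin_ub N (fun j L => 0 <= L /\ forall x y, HH x -> HH y ->
     Rabs (th j x - th j y) <= L * Rabs (x - y))) as [L HL].
  - intros i L L' HLe [H0 H]. split; [lra|]. intros x y Hx Hy. specialize (H x y Hx Hy).
    pose proof (Rabs_pos (x - y)). nra.
  - intros j Hj. destruct (cont_bounded n c d Hcd _ (Hth1_cont j Hj)) as [K HK].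
    set (K' := Rmax K 0). assert (HK0 : 0 <= K') by apply Rmax_r.
    assert (HK' : forall z, BH z -> Rabs (Fth1 j z) <= K').
    { intros z Hz. eapply Rle_trans; [apply HK, Hz| apply Rmax_l]. }
    set (B' := Rmax B 0). assert (HB0 : 0 <= B') by apply Rmax_r.
    assert (HB' : forall z, BH z -> Rabs z <= B').
    { intros z Hz. eapply Rle_trans; [apply HB, Hz| apply Rmax_l]. }
    exists (K' + 2 * B' / g). split. { assert (0 <= 2 * B' / g) by (apply Rle_mult_inv_pos; lra). lra. }
    intros x y Hx Hy.
    assert (0 <= 2 * B' / g) by (apply Rle_mult_inv_pos; lra).
    pose proof (Rabs_pos (x - y)).
    destruct Hx as [i [Hi Hxi]]. destruct Hy as [l [Hl Hyl]].
    destruct (Nat.eq_dec i l) as [<-|Hne].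
    + assert (Hseg : forall z, Rmin x y <= z <= Rmax x y -> HH z).
      { intros z Hz. exists i; split; auto. unfold Rmin, Rmax in Hz. destruct Rle_dec; lra. }
      destruct (MVT_gen (th j) x y (Fth1 j)) as [z [Hz Heq]].
      * intros z Hz. apply Hth_der; auto. apply Hseg; lra.
      * intros z Hz. apply continuity_pt_filterlim. apply (ex_derive_continuous (K:=R_AbsRing) (V:=R_NormedModule) (th j) z).
        eexists. apply Hth_der; auto.
      * replace (th j x - th j y) with (- (th j y - th j x)) by ring.
        rewrite Rabs_Ropp, Heq, Rabs_mult.
        replace (y - x) with (- (x - y)) by ring. rewrite Rabs_Ropp.
        assert (Rabs (Fth1 j z) <= K') by (apply HK'; apply H_sub; apply Hseg; auto).
        apply Rmult_le_compat_r; [apply Rabs_pos|lra].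
    + assert (Hxy := Hgap i l Hi Hl Hne x y Hxi Hyl).
      assert (Htx : Rabs (th j x) <= B') by (apply HB'; apply H_sub; apply Hth_H; auto; exists i; auto).
      assert (Hty : Rabs (th j y) <= B') by (apply HB'; apply H_sub; apply Hth_H; auto; exists l; auto).
      assert (Rabs (th j x - th j y) <= 2 * B').
      { unfold Rminus. eapply Rle_trans; [apply Rabs_triang|]. rewrite Rabs_Ropp. lra. }
      assert (2 * B' <= 2 * B' / g * Rabs (x - y)).
      { unfold Rdiv. rewrite Rmult_assoc. rewrite <- (Rmult_1_r (2 * B')) at 1.
        apply Rmult_le_compat_l; [lra|]. apply Rmult_le_reg_l with g; auto.
        rewrite <- Rmult_assoc, Rinv_r; lra. }
      pose proof (Rabs_pos (Fth1 j x)). nra.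
  - destruct (Nat.eq_dec N 0) as [HN|HN].
    + exists 0. split; [lra|]. intros; lia.
    + destruct (HL 0%nat ltac:(lia)) as [HL0 _]. exists L. split; auto. intros j x y Hj Hx Hy. apply HL; auto.
Qed.

Definition gb j x := Fb1 j x / b j x.
Fixpoint gw (w : list nat) (x : R) : R :=
  match w with [] => 0 | j :: w' => gb j x + Fth1 j x * gw w' (th j x) end.
Fixpoint dth (w : list nat) (x : R) : R :=
  match w with [] => 1 | j :: w' => Fth1 j x * dth w' (th j x) end.

Lemma Tw_bar w : forall k x, word N k w -> BH x -> BH (theta_w th w x).
Proof.
  induction w as [|j w IH]; intros k x Hw Hx; simpl; auto.
  apply word_inv in Hw as [Hj Hw]. change (BH (theta_w th w (th j x))).
  eapply IH; eauto. apply th_bar; auto.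
Qed.

Lemma Bw_pos w : forall k x, word N k w -> BH x -> 0 < b_w b th w x.
Proof.
  induction w as [|j w IH]; intros k x Hw Hx; simpl; [lra|].
  apply word_inv in Hw as [Hj Hw]. apply Rmult_lt_0_compat; auto.
  eapply IH; eauto. apply th_bar; auto.
Qed.

Lemma dth_der w : forall k x, word N k w -> HH x -> is_derive (theta_w th w) x (dth w x).
Proof.
  induction w as [|j w IH]; intros k x Hw Hx; simpl.
  - apply (is_derive_id (K:=R_AbsRing)).
  - apply word_inv in Hw as [Hj Hw].
    change (is_derive (fun y => theta_w th w (th j y)) x (Fth1 j x * dth w (th j x))).
    apply der_comp; [eapply IH; eauto|apply Hth_der; auto].
Qed.

Lemma Bw_der w : forall k x, word N k w -> HH x -> is_derive (b_w b th w) x (gw w x * b_w b th w x).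
Proof.
  induction w as [|j w IH]; intros k x Hw Hx; simpl.
  - replace (0 * 1) with 0 by ring. apply der_const.
  - apply word_inv in Hw as [Hj Hw].
    change (is_derive (fun y => b j y * b_w b th w (th j y)) x
      ((gb j x + Fth1 j x * gw w (th j x)) * (b j x * b_w b th w (th j x)))).
    assert (Hbx : 0 < b j x) by (apply Hb_pos; auto; apply H_sub; auto).
    replace ((gb j x + Fth1 j x * gw w (th j x)) * (b j x * b_w b th w (th j x))) with
      (Fb1 j x * b_w b th w (th j x) + b j x * (Fth1 j x * (gw w (th j x) * b_w b th w (th j x))))
      by (unfold gb; field; lra).
    apply (der_mult (b j) (fun y => b_w b th w (th j y))); [apply Hb_der; auto|].
    apply (der_comp (b_w b th w) (th j)); [eapply IH; eauto|apply Hth_der; auto].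
Qed.

Lemma gw_cont w : forall k, word N k w -> cont_on BH (gw w) /\ cont_on BH (b_w b th w).
Proof.
  induction w as [|j w IH]; intros k Hw; simpl.
  - split; apply cont_on_const.
  - apply word_inv in Hw as [Hj Hw]. destruct (IH _ Hw) as [H1 H2].
    split.
    + apply cont_on_plus.
      * unfold gb, Rdiv. apply cont_on_mult; auto. apply cont_on_inv; auto.
        intros x Hx. apply Rgt_not_eq, Hb_pos; auto.
      * apply cont_on_mult; auto. apply (cont_on_comp BH (gw w) (th j)); auto.
        intros; apply th_bar; auto.
    + apply cont_on_mult; auto. apply (cont_on_comp BH (b_w b th w) (th j)); auto.
      intros; apply th_bar; auto.
Qed.

Lemma gw_app w j x : gw (w ++ [j]) x = gw w x + gb j (theta_w th w x) * dth w x.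
Proof.
  revert x. induction w as [|i w IH]; intros x; simpl.
  - ring.
  - rewrite IH. change (theta_w th (i :: w) x) with (theta_w th w (th i x)). ring.
Qed.

Variable L : R.
Hypothesis HL0 : 0 <= L.
Hypothesis HL : forall j x y, (j < N)%nat -> HH x -> HH y -> Rabs (th j x - th j y) <= L * Rabs (x - y).
Notation eps := (eps_nu n c d N th).

Lemma dth_bnd w k x : word N k w -> HH x -> Rabs (dth w x) <= eps k.
Proof.
  intros Hw Hx. destruct k as [|k].
  - destruct Hw as [Hl _]. destruct w; [|discriminate]. simpl. rewrite Rabs_R1. lra.
  - destruct (H_open n c d x Hx) as [i [Hi [Hxi [e [He Hloc]]]]].
    apply der_bound with (theta_w th w) x (fun y => c i < y < d i).
    + eapply dth_der; eauto.
    + apply locR. exists e; split; auto.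
    + intros y Hy Hne. apply (eps_ge n c d N th Hth_H L HL0 HL).
      exists w, y, x. repeat split; auto; try (destruct Hw; auto). exists i; auto.
Qed.


Definition C1set := fun r => exists beta x, (beta < N)%nat /\ HH x /\
           r = Rabs (Derive (b beta) x) / b beta x.
Notation C1 := (C1const n c d N b).

Lemma C1_bnd : exists B, forall r, C1set r -> r <= B.
Proof.
  destruct (fin_ub N (fun j B => forall x, HH x -> Rabs (Fb1 j x) / b j x <= B)) as [B HB].
  - intros i g g' H1 H2 x Hx. specialize (H2 x Hx). lra.
  - intros j Hj.
    destruct (cont_bounded n c d Hcd _ (Hb1_cont j Hj)) as [K1 HK1].
    destruct (cont_bounded n c d Hcd (fun x => / b j x)) as [K2 HK2].
    { apply cont_on_inv; auto. intros x Hx. apply Rgt_not_eq, Hb_pos; auto. }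
    exists (Rmax K1 0 * Rmax K2 0). intros x Hx.
    assert (Hbx : 0 < b j x) by (apply Hb_pos; auto; apply H_sub; auto).
    assert (H1 : Rabs (Fb1 j x) <= Rmax K1 0) by (eapply Rle_trans; [apply HK1, H_sub, Hx|apply Rmax_l]).
    assert (H2 : Rabs (/ b j x) <= Rmax K2 0) by (eapply Rle_trans; [apply (HK2 x), H_sub, Hx|apply Rmax_l]).
    rewrite Rabs_pos_eq in H2 by (apply Rlt_le, Rinv_0_lt_compat; auto).
    unfold Rdiv. apply Rmult_le_compat; auto; [apply Rabs_pos|apply Rlt_le, Rinv_0_lt_compat; auto].
  - exists B. intros r [j [x [Hj [Hx ->]]]]. rewrite (is_derive_unique _ _ _ (Hb_der j x Hj Hx)).
    apply HB; auto.
Qed.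

Lemma C1_nonneg : 0 <= C1.
Proof.
  unfold C1const. apply lub_nonneg. intros r [j [x [Hj [Hx ->]]]].
  apply Rle_mult_inv_pos; [apply Rabs_pos|apply Hb_pos; auto; apply H_sub; auto].
Qed.

Lemma gb_bnd j x : (j < N)%nat -> HH x -> Rabs (gb j x) <= C1.
Proof.
  intros Hj Hx. destruct C1_bnd as [B HB].
  assert (Hbx : 0 < b j x) by (apply Hb_pos; auto; apply H_sub; auto).
  unfold C1const. eapply Rle_trans; [|apply (lub_ge _ B); [exact HB|]].
  - apply Rle_refl.
  - exists j, x. split; auto. split; auto. rewrite (is_derive_unique _ _ _ (Hb_der j x Hj Hx)).
    unfold gb, Rdiv. rewrite Rabs_mult, Rabs_inv, (Rabs_pos_eq (b j x)); auto; lra.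
Qed.

Fixpoint psum (k : nat) : R := match k with O => 0 | S k => psum k + eps k end.

Lemma psum_nonneg k : 0 <= psum k.
Proof. induction k; simpl; [lra|]. pose proof (eps_nonneg n c d N th Hth_H L HL0 HL k). lra. Qed.

Lemma gw_bnd w : forall k x, word N k w -> HH x -> Rabs (gw w x) <= C1 * psum k.
Proof.
  induction w as [|j w IH] using rev_ind; intros k x Hw Hx.
  - simpl. rewrite Rabs_R0. apply Rmult_le_pos; [apply C1_nonneg|apply psum_nonneg].
  - destruct Hw as [Hl Hf]. rewrite length_app in Hl. simpl in Hl.
    apply Forall_app in Hf as [Hf1 Hf2]. inversion Hf2; subst.
    assert (Hw : word N (length w) w) by (split; auto).
    replace (length w + 1)%nat with (S (length w)) by lia. simpl psum.
    rewrite gw_app.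
    assert (HT : HH (theta_w th w x)) by (eapply (Tw_H n c d N th Hth_H); eauto).
    pose proof (IH _ x Hw Hx). pose proof (gb_bnd j _ H1 HT). pose proof (dth_bnd w _ x Hw Hx).
    pose proof C1_nonneg. pose proof (Rabs_pos (dth w x)). pose proof (Rabs_pos (gb j (theta_w th w x))).
    eapply Rle_trans; [apply Rabs_triang|]. rewrite Rabs_mult. nra.
Qed.


Definition WSsum := fix WS (k : nat) (g : list nat -> R) : R :=
  match k with O => g [] | S k => lsum (seq 0 N) (fun j => WS k (fun w => g (j :: w))) end.

Lemma inseq j : In j (seq 0 N) -> (j < N)%nat.
Proof. intros H. apply in_seq in H. lia. Qed.

Lemma WS_ext k : forall g h, (forall w, word N k w -> g w = h w) -> WSsum k g = WSsum k h.
Proof.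
  induction k; intros g h H; simpl.
  - apply H. split; auto.
  - apply lsum_ext. intros j Hj. apply IHk. intros w Hw. apply H. apply word_cons; auto. apply inseq; auto.
Qed.

Lemma WS_lin k : forall F G a b', WSsum k (fun w => a * F w + b' * G w) = a * WSsum k F + b' * WSsum k G.
Proof.
  induction k; intros F G a b'; simpl; auto.
  rewrite <- lsum_lin. apply lsum_ext. intros j _. apply IHk.
Qed.

Lemma WS_le k : forall F G, (forall w, word N k w -> F w <= G w) -> WSsum k F <= WSsum k G.
Proof.
  induction k; intros F G H; simpl.
  - apply H. split; auto.
  - apply lsum_le. intros j Hj. apply IHk. intros w Hw. apply H. apply word_cons; auto. apply inseq; auto.
Qed.

Lemma WS_abs k : forall F, Rabs (WSsum k F) <= WSsum k (fun w => Rabs (F w)).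
Proof.
  induction k; intros F; simpl; [lra|].
  eapply Rle_trans; [apply lsum_abs|]. apply lsum_le. intros j _. apply IHk.
Qed.


Lemma WS_scal k F a : WSsum k (fun w => a * F w) = a * WSsum k F.
Proof.
  transitivity (WSsum k (fun w => a * F w + 0 * F w)).
  - apply WS_ext. intros; ring.
  - rewrite WS_lin. ring.
Qed.

Variables (s lam : R) (v Dv : R -> R).
Hypothesis Hs : 0 < s.
Hypothesis Hlam : 0 < lam.
Hypothesis Hv_pos : forall x, BH x -> 0 < v x.
Hypothesis Hv_eig : forall x, BH x -> Ls N b th s v x = lam * v x.
Hypothesis Hv_der : forall x, HH x -> is_derive v x (Dv x).

Definition pw w x := Rpower (b_w b th w x) s.

Lemma pw_cons j w k x : (j < N)%nat -> word N k w -> BH x ->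
  pw (j :: w) x = Rpower (b j x) s * pw w (th j x).
Proof.
  intros Hj Hw Hx. unfold pw. simpl b_w. rewrite Rpower_mult_distr; auto.
  eapply Bw_pos; eauto. apply th_bar; auto.
Qed.

Lemma pw_pos w x : 0 < pw w x.
Proof. apply exp_pos. Qed.

Lemma Rpower_1_l y : Rpower 1 y = 1.
Proof. unfold Rpower. rewrite ln_1, Rmult_0_r. apply exp_0. Qed.

Lemma eig_iter k : forall x, HH x -> lam ^ k * v x = WSsum k (fun w => pw w x * v (theta_w th w x)).
Proof.
  induction k; intros x Hx.
  - simpl. unfold pw. simpl. rewrite Rpower_1_l. ring.
  - simpl WSsum.
    transitivity (lsum (seq 0 N) (fun j => lam ^ k * (Rpower (b j x) s * v (th j x)))).
    + rewrite lsum_scal. change (lsum (seq 0 N) (fun j => Rpower (b j x) s * v (th j x))) with (Ls N b th s v x).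
      rewrite Hv_eig; [simpl; ring|apply H_sub; auto].
    + apply lsum_ext. intros j Hj. apply inseq in Hj.
      replace (lam ^ k * (Rpower (b j x) s * v (th j x))) with
        (Rpower (b j x) s * (lam ^ k * v (th j x))) by ring.
      rewrite IHk; [|apply Hth_H; auto].
      rewrite <- WS_scal. apply WS_ext. intros w Hw.
      rewrite (pw_cons j w k x); auto; [|apply H_sub; auto]. simpl theta_w. ring.
Qed.

Lemma Rpower_m1 x y : 0 < x -> Rpower x (y - 1) = Rpower x y / x.
Proof.
  intros Hx. unfold Rminus. rewrite Rpower_plus, Rpower_Ropp, Rpower_1; auto.
Qed.

Lemma der_step x : HH x -> lam * Dv x = lsum (seq 0 N) (fun j =>
   s * Rpower (b j x) s * gb j x * v (th j x) + Rpower (b j x) s * Fth1 j x * Dv (th j x)).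
Proof.
  intros Hx.
  apply der_unique with (fun y => lsum (seq 0 N) (fun j => Rpower (b j y) s * v (th j y))) x.
  - apply is_derive_ext_loc with (fun y => lam * v y).
    + generalize (H_loc n c d x Hx). apply filter_imp. intros t Ht.
      change (lam * v t = Ls N b th s v t). rewrite Hv_eig; auto. apply H_sub; auto.
    + apply is_derive_scal. apply Hv_der; auto.
  - apply (lsum_der (seq 0 N) (fun j y => Rpower (b j y) s * v (th j y))).
    intros j Hj. apply inseq in Hj.
    assert (Hbx : 0 < b j x) by (apply Hb_pos; auto; apply H_sub; auto).
    assert (d1 : is_derive (fun y => Rpower (b j y) s) x (Fb1 j x * (s * Rpower (b j x) (s - 1)))).
    { apply (der_comp (fun u => Rpower u s) (b j)); [|apply Hb_der; auto].
      apply is_derive_Reals. apply derivable_pt_lim_power; auto. }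
    assert (d2 : is_derive (fun y => v (th j y)) x (Fth1 j x * Dv (th j x))).
    { apply (der_comp v (th j)); [apply Hv_der; apply Hth_H; auto|apply Hth_der; auto]. }
    replace (s * Rpower (b j x) s * gb j x * v (th j x) + Rpower (b j x) s * Fth1 j x * Dv (th j x))
      with (Fb1 j x * (s * Rpower (b j x) (s - 1)) * v (th j x) + Rpower (b j x) s * (Fth1 j x * Dv (th j x))).
    + apply (der_mult (fun y => Rpower (b j y) s) (fun y => v (th j y))); auto.
    + rewrite Rpower_m1; auto. unfold gb. field. lra.
Qed.


Lemma der_iter k : forall x, HH x -> lam ^ k * Dv x = WSsum k (fun w =>
   s * pw w x * gw w x * v (theta_w th w x) + pw w x * dth w x * Dv (theta_w th w x)).
Proof.
  induction k; intros x Hx.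
  - simpl. unfold pw. simpl. rewrite Rpower_1_l. ring.
  - simpl WSsum. change (lam ^ S k) with (lam * lam ^ k).
    replace (lam * lam ^ k * Dv x) with (lam ^ k * (lam * Dv x)) by ring.
    rewrite der_step, <- lsum_scal; auto.
    apply lsum_ext. intros j Hj. apply inseq in Hj.
    set (y := th j x). set (P := Rpower (b j x) s).
    replace (lam ^ k * (s * P * gb j x * v y + P * Fth1 j x * Dv y)) with
      ((s * P * gb j x) * (lam ^ k * v y) + (P * Fth1 j x) * (lam ^ k * Dv y)) by ring.
    assert (Hy : HH y) by (apply Hth_H; auto).
    rewrite eig_iter, IHk; auto. rewrite <- WS_lin. apply WS_ext. intros w Hw.
    rewrite (pw_cons j w k x); auto; [|apply H_sub; auto]. fold P y. simpl gw. simpl dth.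
    change (theta_w th (j :: w) x) with (theta_w th w y). fold y. ring.
Qed.


Hypothesis Hv_cont : cont_on BH v.
Hypothesis HDv_cont : cont_on BH Dv.

Lemma M_bnd : exists K, 0 <= K /\ forall y, BH y -> Rabs (Dv y) <= K * v y.
Proof.
  destruct (cont_bounded n c d Hcd (fun y => Dv y * / v y)) as [K HK].
  { apply cont_on_mult; auto. apply cont_on_inv; auto. intros x Hx. apply Rgt_not_eq, Hv_pos; auto. }
  exists (Rmax K 0). split; [apply Rmax_r|]. intros y Hy.
  specialize (HK y Hy). pose proof (Hv_pos y Hy).
  rewrite Rabs_mult, Rabs_inv, (Rabs_pos_eq (v y)) in HK by lra.
  pose proof (Rmax_l K 0).
  apply Rmult_le_reg_r with (/ v y); [apply Rinv_0_lt_compat; auto|].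
  rewrite Rmult_assoc, Rinv_r; lra.
Qed.

Variable KM : R.
Hypothesis HKM0 : 0 <= KM.
Hypothesis HKM : forall y, BH y -> Rabs (Dv y) <= KM * v y.

Lemma bound1 k x : HH x -> Rabs (Dv x) <= (s * C1 * psum k + eps k * KM) * v x.
Proof.
  intros Hx. assert (Hlk : 0 < lam ^ k) by (apply pow_lt; auto).
  apply Rmult_le_reg_l with (lam ^ k); auto.
  rewrite <- (Rabs_pos_eq (lam ^ k)) at 1 by lra. rewrite <- Rabs_mult, der_iter; auto.
  replace (lam ^ k * ((s * C1 * psum k + eps k * KM) * v x)) with
    ((s * C1 * psum k + eps k * KM) * (lam ^ k * v x)) by ring.
  rewrite eig_iter, <- WS_scal; auto.
  eapply Rle_trans; [apply WS_abs|]. apply WS_le. intros w Hw.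
  assert (HT : HH (theta_w th w x)) by (eapply (Tw_H n c d N th Hth_H); eauto).
  replace (s * C1 * psum k) with (s * (C1 * psum k)) by ring.
  apply term_bnd; auto.
  - apply pw_pos.
  - apply Hv_pos, H_sub; auto.
  - eapply gw_bnd; eauto.
  - eapply dth_bnd; eauto.
  - apply HKM, H_sub; auto.
Qed.

Variable delta : nat.
Hypothesis Hdelta : (delta <= 1)%nat.
Hypothesis Hsign : forall k w x, (1 <= k)%nat -> word N k w -> HH x -> (-1) ^ delta * gw w x <= 0.

Lemma bound2 k x : (1 <= k)%nat -> HH x -> (-1) ^ delta * Dv x <= (eps k * KM) * v x.
Proof.
  intros Hk Hx. assert (Hlk : 0 < lam ^ k) by (apply pow_lt; auto).
  apply Rmult_le_reg_l with (lam ^ k); auto.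
  replace (lam ^ k * ((-1) ^ delta * Dv x)) with ((-1) ^ delta * (lam ^ k * Dv x)) by ring.
  rewrite der_iter; auto.
  replace (lam ^ k * (eps k * KM * v x)) with ((eps k * KM) * (lam ^ k * v x)) by ring.
  rewrite eig_iter, <- !WS_scal; auto.
  apply WS_le. intros w Hw.
  assert (HT : HH (theta_w th w x)) by (eapply (Tw_H n c d N th Hth_H); eauto).
  apply term_bnd2; auto.
  - destruct delta as [|[|]]; [| |lia]; simpl; unfold Rabs; destruct Rcase_abs; lra.
  - eapply Hsign; eauto.
  - apply pw_pos.
  - apply Hv_pos, H_sub; auto.
  - eapply dth_bnd; eauto.
  - apply HKM, H_sub; auto.
Qed.


Variable Ssum : R.
Hypothesis HS : is_lim_seq (sum_n eps) Ssum.
Hypothesis Heps0 : is_lim_seq eps 0.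

Lemma psum_sum k : psum (S k) = sum_n eps k.
Proof.
  induction k.
  - change (0 + eps 0 = sum_n eps 0). rewrite sum_O. ring.
  - change (psum (S (S k))) with (psum (S k) + eps (S k)). rewrite IHk, sum_Sn. reflexivity.
Qed.

Lemma psum_lim : is_lim_seq psum Ssum.
Proof.
  apply is_lim_seq_incr_1. apply is_lim_seq_ext with (sum_n eps); auto.
  intros k; rewrite psum_sum; auto.
Qed.

Lemma final_H1 x : HH x -> Rabs (Dv x) <= (s * C1 * Ssum) * v x.
Proof.
  intros Hx. assert (Hv : 0 < v x) by (apply Hv_pos, H_sub; auto).
  assert (Hl : is_lim_seq (fun k => s * C1 * psum k + eps k * KM) (s * C1 * Ssum + 0 * KM)).
  { apply is_lim_seq_plus'.
    - apply (is_lim_seq_scal_l psum (s * C1) Ssum psum_lim).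
    - apply (is_lim_seq_scal_r eps KM 0 Heps0). }
  assert (Hb : forall k, Rabs (Dv x) / v x <= s * C1 * psum k + eps k * KM).
  { intros k. apply Rmult_le_reg_r with (v x); auto. unfold Rdiv. rewrite Rmult_assoc, Rinv_l by lra.
    rewrite Rmult_1_r. apply bound1; auto. }
  assert (H := is_lim_seq_le (fun _ => Rabs (Dv x) / v x) _ (Rabs (Dv x) / v x) _
     Hb (is_lim_seq_const _) Hl).
  simpl in H. rewrite Rmult_0_l, Rplus_0_r in H.
  apply Rmult_le_reg_r with (/ v x); [apply Rinv_0_lt_compat; auto|].
  rewrite Rmult_assoc, Rinv_r by lra. rewrite Rmult_1_r. exact H.
Qed.

Lemma final1 x : BH x -> Rabs (Dv x) <= (s * C1 * Ssum) * v x.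
Proof.
  intros Hx. set (K := s * C1 * Ssum).
  assert (Hc : forall sg, cont_on BH (fun y => sg * Dv y + (- K) * v y)).
  { intros sg. apply cont_on_plus; apply cont_on_mult; auto; apply cont_on_const. }
  assert (H1 := lim_le0 n c d Hcd _ (Hc 1) ltac:(intros y Hy; pose proof (final_H1 y Hy);
     pose proof (Rle_abs (Dv y)); fold K in H; lra) x Hx).
  assert (H2 := lim_le0 n c d Hcd _ (Hc (-1)) ltac:(intros y Hy; pose proof (final_H1 y Hy);
     pose proof (Rle_abs (- Dv y)); rewrite Rabs_Ropp in H0; fold K in H; lra) x Hx).
  simpl in H1, H2. unfold Rabs; destruct Rcase_abs; lra.
Qed.

Lemma final2 x : BH x -> (-1) ^ delta * Dv x <= 0.
Proof.
  intros Hx. apply (lim_le0 n c d Hcd (fun y => (-1) ^ delta * Dv y)); auto.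
  { apply cont_on_mult; auto; apply cont_on_const. }
  intros y Hy. assert (Hv : 0 < v y) by (apply Hv_pos, H_sub; auto).
  assert (Hl : is_lim_seq (fun k => eps (S k) * KM * v y) (0 * KM * v y)).
  { apply (is_lim_seq_scal_r _ (v y) (0 * KM)). apply (is_lim_seq_scal_r _ KM 0).
    apply (is_lim_seq_incr_1 eps 0). auto. }
  assert (H := is_lim_seq_le (fun _ => (-1) ^ delta * Dv y) _ _ _
     (fun k => bound2 (S k) y ltac:(lia) Hy) (is_lim_seq_const _) Hl).
  simpl in H. lra.
Qed.

End Main.

Lemma choose_F (N : nat) (P : nat -> (nat -> R -> R) -> Prop) :
  (forall j, (j < N)%nat -> exists F, P j F) -> exists G : nat -> nat -> R -> R, forall j, (j < N)%nat -> P j (G j).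
Proof.
  intros H.
  exists (fun j => match Compare_dec.lt_dec j N with left h => proj1_sig (constructive_indefinite_description _ (H j h)) | right _ => fun _ _ => 0 end).
  intros j Hj. destruct (Compare_dec.lt_dec j N) as [h|h]; [apply proj2_sig|contradiction].
Qed.

Lemma Cm_facts n c d m f F : (1 <= m)%nat ->
  ((forall x, barHset n c d x -> F O x = f x) /\
    (forall k, (k <= m)%nat -> cont_on (barHset n c d) (F k)) /\
    (forall k x, (k < m)%nat -> Hset n c d x -> is_derive (F k) x (F (Nat.succ k) x))) ->
  cont_on (barHset n c d) f /\ cont_on (barHset n c d) (F 1%nat) /\
  (forall x, Hset n c d x -> is_derive f x (F 1%nat x)).
Proof.
  intros Hm [H0 [H1 H2]]. split; [|split].
  - apply cont_on_ext with (F O); [apply H1; lia| auto].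
  - apply H1; auto.
  - intros x Hx. apply is_derive_ext_loc with (F O); [|apply H2; auto; lia].
    generalize (H_loc n c d x Hx). apply filter_imp. intros t Ht. apply H0, H_sub; auto.
Qed.

Theorem theorem6p1
  (n : nat) (c d : nat -> R)
  (Hcd : forall j, (j < n)%nat -> c j < d j)
  (Hdisj : forall i j, (i < n)%nat -> (j < n)%nat -> i <> j -> d i < c j \/ d j < c i)
  (N : nat) (m : nat) (Hm : (1 <= m)%nat)
  (b th : nat -> R -> R)
  (Hb_Cm : forall beta, (beta < N)%nat -> Cm_bar n c d m (b beta))
  (Hth_Cm : forall beta, (beta < N)%nat -> Cm_bar n c d m (th beta))
  (Hb_pos : forall beta x, (beta < N)%nat -> barHset n c d x -> 0 < b beta x)
  (Hth_H : forall beta x, (beta < N)%nat -> Hset n c d x -> Hset n c d (th beta x))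
  (mu : nat) (kappa : R) (Hmu : (1 <= mu)%nat) (Hkappa : kappa < 1)
  (Hcontr : forall w x y, word N mu w -> barHset n c d x -> barHset n c d y ->
      Rabs (theta_w th w x - theta_w th w y) <= kappa * Rabs (x - y))
  (s : R) (Hs : 0 < s)
  (v : R -> R) (lam : R) (Hlam : 0 < lam)
  (Hv_Cm : Cm_bar n c d m v)
  (Hv_pos : forall x, barHset n c d x -> 0 < v x)
  (Hv_eig : forall x, barHset n c d x -> Ls N b th s v x = lam * v x) :
  (forall Dv : R -> R, Dext n c d v Dv ->
     forall x, barHset n c d x ->
       Rbar_le (Finite (Rabs (Dv x) / v x)%R)
               (Rbar_mult (Finite (C1const n c d N b * s)%R) (sum_eps n c d N th)))
  /\
  (forall delta : nat, (delta <= 1)%nat ->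
     (forall nu w, (1 <= nu)%nat -> word N nu w ->
        forall Db : R -> R, Dext n c d (b_w b th w) Db ->
        forall x, barHset n c d x -> (-1) ^ delta * Db x / b_w b th w x <= 0) ->
     forall Dv : R -> R, Dext n c d v Dv ->
     forall x, barHset n c d x -> (-1) ^ delta * Dv x <= 0).
Proof.
  destruct (choose_F N (fun j F => (forall x, barHset n c d x -> F O x = b j x) /\
    (forall k, (k <= m)%nat -> cont_on (barHset n c d) (F k)) /\
    (forall k x, (k < m)%nat -> Hset n c d x -> is_derive (F k) x (F (Nat.succ k) x)))) as [Gb HGb].
  { intros j Hj. apply Hb_Cm; auto. }
  destruct (choose_F N (fun j F => (forall x, barHset n c d x -> F O x = th j x) /\
    (forall k, (k <= m)%nat -> cont_on (barHset n c d) (F k)) /\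
    (forall k x, (k < m)%nat -> Hset n c d x -> is_derive (F k) x (F (Nat.succ k) x)))) as [Gt HGt].
  { intros j Hj. apply Hth_Cm; auto. }
  set (Fb1 := fun j => Gb j 1%nat). set (Fth1 := fun j => Gt j 1%nat).
  assert (Hbf : forall j, (j < N)%nat -> _) by (intros j Hj; exact (Cm_facts n c d m (b j) (Gb j) Hm (HGb j Hj))).
  assert (Htf : forall j, (j < N)%nat -> _) by (intros j Hj; exact (Cm_facts n c d m (th j) (Gt j) Hm (HGt j Hj))).
  assert (Hb_cont : forall j, (j < N)%nat -> cont_on (barHset n c d) (b j)) by (intros j Hj; apply (Hbf j Hj)).
  assert (Hb1_cont : forall j, (j < N)%nat -> cont_on (barHset n c d) (Fb1 j)) by (intros j Hj; apply (Hbf j Hj)).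
  assert (Hb_der : forall j x, (j < N)%nat -> Hset n c d x -> is_derive (b j) x (Fb1 j x)) by (intros j x Hj; apply (Hbf j Hj)).
  assert (Hth_cont : forall j, (j < N)%nat -> cont_on (barHset n c d) (th j)) by (intros j Hj; apply (Htf j Hj)).
  assert (Hth1_cont : forall j, (j < N)%nat -> cont_on (barHset n c d) (Fth1 j)) by (intros j Hj; apply (Htf j Hj)).
  assert (Hth_der : forall j x, (j < N)%nat -> Hset n c d x -> is_derive (th j) x (Fth1 j x)) by (intros j x Hj; apply (Htf j Hj)).
  clear Hbf Htf.
  assert (Hv_cont : cont_on (barHset n c d) v).
  { destruct Hv_Cm as [F HF]. apply (Cm_facts n c d m v F Hm HF). }
  destruct (lip1 n c d Hcd Hdisj N th Fth1 Hth1_cont Hth_der Hth_H) as [L [HL0 HL]].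
  destruct (eps_series n c d N th Hth_H L HL0 HL mu kappa Hmu Hkappa Hcontr) as [Ssum HS].
  assert (Heps0 : is_lim_seq (eps_nu n c d N th) 0).
  { apply ex_series_lim_0. exists Ssum; auto. }
  assert (HS' : is_lim_seq (sum_n (eps_nu n c d N th)) Ssum) by exact HS.
  split.
  - intros Dv [HDv_cont HDv] x Hx.
    destruct (M_bnd n c d Hcd v Dv Hv_pos Hv_cont HDv_cont) as [KM [HKM0 HKM]].
    pose proof (final1 n c d Hcd N b th Fb1 Fth1 Hb_cont Hb1_cont Hb_der Hth_cont Hth_der Hb_pos Hth_H
       L HL0 HL s lam v Dv Hs Hlam Hv_pos Hv_eig HDv Hv_cont HDv_cont KM HKM Ssum HS' Heps0 x Hx) as H.
    unfold sum_eps. rewrite (is_lim_seq_unique _ _ HS'). simpl.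
    pose proof (Hv_pos x Hx).
    apply Rmult_le_reg_r with (v x); auto. unfold Rdiv. rewrite Rmult_assoc, Rinv_l by lra.
    rewrite Rmult_1_r. replace (C1const n c d N b * s * Ssum) with (s * C1const n c d N b * Ssum) by ring.
    exact H.
  - intros delta Hdelta Hsg Dv [HDv_cont HDv] x Hx.
    destruct (M_bnd n c d Hcd v Dv Hv_pos Hv_cont HDv_cont) as [KM [HKM0 HKM]].
    apply (final2 n c d Hcd N b th Fb1 Fth1 Hb_der Hth_cont Hth_der Hb_pos Hth_H
       L HL0 HL s lam v Dv Hs Hlam Hv_pos Hv_eig HDv HDv_cont KM HKM delta Hdelta); auto.
    intros k w y Hk Hw Hy.
    destruct (gw_cont n c d Hcd N b th Fb1 Fth1 Hb_cont Hb1_cont Hth_cont Hth1_cont Hb_pos Hth_H w k Hw) as [Hc1 Hc2].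
    assert (HD : Dext n c d (b_w b th w) (fun z => gw b th Fb1 Fth1 w z * b_w b th w z)).
    { split.
      - apply cont_on_mult; auto.
      - intros z Hz. eapply Bw_der; eauto. }
    pose proof (Hsg k w Hk Hw _ HD y (H_sub n c d y Hy)) as H. cbv beta in H.
    pose proof (Bw_pos n c d Hcd N b th Hth_cont Hb_pos Hth_H w k y Hw (H_sub n c d y Hy)).
    replace ((-1) ^ delta * (gw b th Fb1 Fth1 w y * b_w b th w y) / b_w b th w y)
      with ((-1) ^ delta * gw b th Fb1 Fth1 w y) in H by (field; lra). exact H.
Qed.
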